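(* Let $G=(V,E)$ be a graph on $|V|=n$ vertices with minimum degree $\delta(G)>0$ and $|L(G;1/20)|\leq n/14$. Then $f_o(G)\geq n/61$.
   Context: For a graph $G=(V,E)$ and $\beta>0$, $L(G;\beta)$ is the set of vertices $v\in V$ for which there exists $u\in V$ with $uv\in E$ and $|N(u)\setminus N(v)|\geq \beta\,|N(u)\cup N(v)|$, where $N(x)$ is the neighborhood of $x$ in $G$. For a graph $G$, $f_o(G)$ denotes the maximum of $|V_0|$ over all $V_0\subseteq V(G)$ such that the induced subgraph $G[V_0]$ has all degrees odd. *)

(* Defs.v *)
From mathcomp Require Import all_boot all_order all_algebra.
Set Implicit Arguments. Unset Strict Implicit. Unset Printing Implicit Defensive.
Import Order.TTheory GRing.Theory Num.Theory.

Definition simple_graph (T : finType) (e : rel T) : Prop :=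
  symmetric e /\ irreflexive e.

Definition nbhd (T : finType) (e : rel T) (x : T) : {set T} := [set y | e x y].

Definition min_deg_pos (T : finType) (e : rel T) : Prop :=
  forall v : T, 0 < #|nbhd e v|.

Definition Lset (T : finType) (e : rel T) (beta : rat) : {set T} :=
  [set v | [exists u, e u v &&
     (beta * (#|nbhd e u :|: nbhd e v|)%:R <= (#|nbhd e u :\: nbhd e v|)%:R)%R]].

Definition odd_induced (T : finType) (e : rel T) (S : {set T}) : bool :=
  [forall v in S, odd #|nbhd e v :&: S|].

Definition f_o (T : finType) (e : rel T) : nat :=
  \max_(S : {set T} | odd_induced e S) #|S|.

(* Main.v *)
Require Import Defs.
From mathcomp Require Import all_boot all_order all_algebra.
From mathcomp Require Import zify lra.
Import Order.TTheory GRing.Theory Num.Theory.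
Set Implicit Arguments. Unset Strict Implicit. Unset Printing Implicit Defensive.


Definition degs (T : finType) (r : rel T) (P : {set T}) (x : T) : nat :=
  \sum_(y in P) r x y.
Definition even_set (T : finType) (r : rel T) (P : {set T}) : Prop :=
  forall x, x \in P -> ~~ odd (degs r P x).

Lemma card_sumP (T : finType) (Q : {set T}) (p : pred T) :
  #|[set y in Q | p y]| = \sum_(y in Q) p y.
Proof.
rewrite -sum1dep_card big_mkcondr /=; apply: eq_bigr => y _; by case: (p y).
Qed.

Lemma sum_xor (T : finType) (Q : {set T}) (p q : pred T) :
  \sum_(y in Q) (p y (+) q y) + (\sum_(y in Q) (p y && q y)).*2
  = \sum_(y in Q) p y + \sum_(y in Q) q y.
Proof.
rewrite -addnn -!big_split /=; apply: eq_bigr => y _.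
by case: (p y); case: (q y).
Qed.

Lemma odd_sum_xor (T : finType) (Q : {set T}) (p q : pred T) :
  odd (\sum_(y in Q) (p y (+) q y)) =
  odd (\sum_(y in Q) p y) (+) odd (\sum_(y in Q) q y).
Proof. by rewrite -oddD -sum_xor oddD odd_double addbF. Qed.

Section Gallai.
Variable T : finType.

Lemma gallai n : forall (r : rel T) (A : {set T}), symmetric r -> irreflexive r ->
  #|A| = n -> exists P : {set T}, P \subset A /\ even_set r P /\ even_set r (A :\: P).
Proof.
elim: n => [|n IH] r A rsym rirr hA.
  exists set0; split; first exact: sub0set.
  split; first by move=> x; rewrite inE.
  move=> x; rewrite setD0 => hx.
  by move: hA => /eqP; rewrite cards_eq0 => /eqP hA0; rewrite hA0 inE in hx.
case: (boolP [forall x in A, ~~ odd (degs r A x)]) => hall.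
  exists A; split; first exact: subxx.
  split; first by move=> x hx; move/forallP: hall => /(_ x); rewrite hx.
  by move=> x; rewrite setDv inE.
have [v hvA hvodd] : exists2 v, v \in A & odd (degs r A v).
  move/forallPn: hall => [v]; rewrite negb_imply negbK => /andP [h1 h2].
  by exists v.
set M := [set y in A | r v y].
set r' : rel T := fun x y => r x y (+) [&& x \in M, y \in M & x != y].
have r'sym : symmetric r'.
  move=> x y; rewrite /r' rsym; congr (_ (+) _).
  by case: (x \in M); case: (y \in M); rewrite //= eq_sym.
have r'irr : irreflexive r'.
  by move=> x; rewrite /r' rirr eqxx !andbF.
set A' := A :\ v.
have hA' : #|A'| = n by move: hA; rewrite (cardsD1 v) hvA add1n => -[].
have [P' [sP' [eP' eQ']]] := IH r' A' r'sym r'irr hA'.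
have vM : v \notin M by rewrite inE rirr andbF.
have MA' : M \subset A'.
  apply/subsetP=> y; rewrite !inE => /andP [hy hr]; rewrite hy andbT.
  by apply: contraTneq hr => ->; rewrite rirr.
have Modd : odd #|M| by rewrite card_sumP.
have TL : forall Q : {set T}, Q \subset A' -> even_set r' Q ->
   (~~ odd #|M :&: Q| -> even_set r (v |: Q)) /\ (odd #|M :&: Q| -> even_set r Q).
  move=> Q sQ eQ.
  have vQ : v \notin Q by apply/negP => hv; have := subsetP sQ v hv; rewrite !inE eqxx.
  have key : forall x, x \in Q ->
     odd (degs r Q x) = odd (degs r' Q x) (+) ((x \in M) && ~~ odd #|M :&: Q|).
    move=> x hx.
    have -> : odd (degs r' Q x) = odd (degs r Q x) (+)
                 odd (\sum_(y in Q) [&& x \in M, y \in M & x != y]).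
      by rewrite /degs /r' odd_sum_xor.
    case hxM : (x \in M) => /=.
      have -> : \sum_(y in Q) [&& true, y \in M & x != y] = #|M :&: Q| - 1.
        rewrite -card_sumP.
        have -> : [set y in Q | [&& true, y \in M & x != y]] = (M :&: Q) :\ x.
          by apply/setP => y; rewrite !inE eq_sym; case: (y \in Q); case: (y != x); case: (y \in A); case: (r v y).
        by rewrite (cardsD1 x (M :&: Q)) in_setI hxM hx /= add1n subn1.
      have hpos : 0 < #|M :&: Q| by apply/card_gt0P; exists x; rewrite in_setI hxM hx.
      rewrite oddB // /=.
      by case: (odd (degs r Q x)); case: (odd #|M :&: Q|).
    have -> : \sum_(y in Q) [&& false, y \in M & x != y] = 0 by rewrite big1.
    by rewrite /=; case: (odd (degs r Q x)).
  split.
  - move=> hev y; rewrite in_setU1 => /orP [/eqP -> | hy].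
      rewrite /degs big_setU1 //= rirr add0n -card_sumP.
      have -> : [set y in Q | r v y] = M :&: Q.
        apply/setP => z; case hz: (z \in Q); last by rewrite !inE hz andbF.
        by have := subsetP sQ z hz; rewrite !inE hz => /andP [_ ->]; rewrite andbT.
      exact: hev.
    rewrite /degs big_setU1 //= oddD.
    have := key y hy; rewrite /degs => ->.
    rewrite (negbTE (eQ y hy)) hev /= andbT.
    have -> : r y v = (y \in M).
      rewrite inE rsym; have := subsetP sQ y hy; rewrite !inE => /andP [_ ->].
      by [].
    by case: (y \in M).
  - move=> hodd y hy; have := key y hy; rewrite /degs => ->.
    by rewrite (negbTE (eQ y hy)) hodd andbF.
have hpart : #|M :&: P'| + #|M :&: (A' :\: P')| = #|M|.
  rewrite -(cardsID P' M); congr (_ + _).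
  by rewrite setIDA (setIidPl MA').
case: (boolP (odd #|M :&: P'|)) => hP'.
  exists P'; split; first exact: (subset_trans sP' (subD1set A v)).
  split; first exact: ((TL P' sP' eP').2 hP').
  have -> : A :\: P' = v |: (A' :\: P').
    apply/setP => z; rewrite !inE; case: (z =P v) => [-> | hz] /=.
      rewrite hvA andbT; apply/negP => hv; have := subsetP sP' v hv.
      by rewrite !inE eqxx.
    by [].
  apply: (TL (A' :\: P') (subsetDl _ _) eQ').1.
  apply/negP => h; move: Modd; rewrite -hpart oddD.
  by rewrite hP' h.
exists (v |: P'); split.
  apply/subsetP => z; rewrite !inE => /orP [/eqP -> // | hz].
  by have := subsetP sP' z hz; rewrite !inE => /andP [_ ->].
split; first exact: ((TL P' sP' eP').1 hP').
have -> : A :\: (v |: P') = A' :\: P'.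
  by apply/setP => z; rewrite !inE; case: (z == v); case: (z \in P'); case: (z \in A).
apply: (TL (A' :\: P') (subsetDl _ _) eQ').2.
move: Modd; rewrite -hpart oddD.
by move: hP'; case: (odd #|M :&: P'|).
Qed.
End Gallai.


Lemma cluster (T : finType) (e : rel T) (esym : symmetric e) (eirr : irreflexive e)
   (v : T) (A : {set T}) : A \subset nbhd e v ->
   exists W : {set T}, W \subset v |: A /\ odd_induced e W /\ #|A| <= 2 * #|W|.
Proof.
move=> sA.
set r : rel T := fun x y => (x != y) && ~~ e x y.
have rsym : symmetric r by move=> x y; rewrite /r eq_sym esym.
have rirr : irreflexive r by move=> x; rewrite /r eqxx.
have main : forall Q : {set T}, Q \subset A -> even_set r Q -> #|A| <= 2 * #|Q| ->
   exists W : {set T}, W \subset v |: A /\ odd_induced e W /\ #|A| <= 2 * #|W|.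
  move=> Q sQ eQ hQ.
  have degrel : forall x, x \in Q -> #|nbhd e x :&: Q| + degs r Q x = #|Q| - 1.
    move=> x hx.
    have -> : nbhd e x :&: Q = [set y in Q | e x y].
      by apply/setP => y; rewrite !inE andbC.
    rewrite card_sumP /degs -big_split /=.
    have -> : \sum_(i in Q) (e x i + r x i) = \sum_(i in Q) (x != i).
      apply: eq_bigr => y _; rewrite /r; case: (x =P y) => [<- | _]; first by rewrite eirr.
      by case: (e x y).
    rewrite -card_sumP (cardsD1 x Q) hx add1n subn1 /=.
    by apply: eq_card => y; rewrite !inE eq_sym andbC.
  have vQ : v \notin Q.
    apply/negP => hv; have := subsetP sA v (subsetP sQ v hv); by rewrite inE eirr.
  have QN : forall x, x \in Q -> e v x.
    by move=> x hx; have := subsetP sA x (subsetP sQ x hx); rewrite inE.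
  case: (boolP (odd #|Q|)) => hodd.
  - exists (v |: Q); split; first by apply: setUS.
    split; last by rewrite cardsU1 vQ; lia.
    apply/forallP => x; apply/implyP; rewrite in_setU1 => /orP [/eqP -> | hx].
      have -> : nbhd e v :&: (v |: Q) = Q.
        apply/setP => y; rewrite !inE; case: (y =P v) => [-> | _] /=; first by rewrite eirr (negbTE vQ).
        by case hy: (y \in Q); rewrite ?andbF // (QN y hy).
      by [].
    have -> : nbhd e x :&: (v |: Q) = v |: (nbhd e x :&: Q).
      apply/setP => y; rewrite !inE; case: (y =P v) => [-> | _] //=.
      by rewrite esym (QN x hx).
    rewrite cardsU1 !inE (negbTE vQ) andbF /=.
    have h := degrel x hx; have h2 := eQ x hx.
    have hpos : 0 < #|Q| by apply/card_gt0P; exists x.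
    have : odd (#|nbhd e x :&: Q| + degs r Q x) = odd (#|Q| - 1) by rewrite h.
    rewrite oddD oddB // hodd (negbTE h2) addbF /= => ->.
    by [].
  - exists Q; split; first by apply: (subset_trans sQ); apply: subsetUr.
    split; last by [].
    apply/forallP => x; apply/implyP => hx.
    have h := degrel x hx; have h2 := eQ x hx.
    have hpos : 0 < #|Q| by apply/card_gt0P; exists x.
    have : odd (#|nbhd e x :&: Q| + degs r Q x) = odd (#|Q| - 1) by rewrite h.
    by rewrite oddD oddB // (negbTE hodd) (negbTE h2) addbF /=.
have [P [sP [eP eD]]] := gallai rsym rirr (erefl #|A|).
have hc : #|P| + #|A :\: P| = #|A| by rewrite -(cardsID P A) (setIidPr sP).
case: (leqP #|A| (2 * #|P|)) => h.
  exact: (main P sP eP h).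
apply: (main (A :\: P) (subsetDl _ _) eD); lia.
Qed.


Lemma card_split (T : finType) (A B : {set T}) : #|A :|: B| = #|A :\: B| + #|B|.
Proof.
rewrite cardsU cardsD.
have := subset_leq_card (subsetIl A B); have := subset_leq_card (subsetIr A B); lia.
Qed.

Section Main.
Variable T : finType.
Variable e : rel T.
Hypothesis esym : symmetric e.
Hypothesis eirr : irreflexive e.
Hypothesis emin : min_deg_pos e.

Local Notation N := (nbhd e).
Local Notation L := (Lset e (1 / 20)%R).

Lemma inN x y : (y \in N x) = e x y.
Proof. by rewrite inE. Qed.

Lemma notinN x : x \notin N x.
Proof. by rewrite inN eirr. Qed.

Lemma keyK u v : v \notin L -> e u v -> 19 * #|N u :\: N v| < #|N v|.
Proof.
move=> hv huv.
have h : ~~ ((1 / 20 : rat) * (#|N u :|: N v|)%:R <= (#|N u :\: N v|)%:R)%R.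
  apply: contra hv => h; rewrite inE; apply/existsP; exists u; by rewrite huv h.
have h2 : 20 * #|N u :\: N v| < #|N u :|: N v|.
  rewrite ltnNge; apply: contra h => h.
  rewrite -(ler_nat rat) natrM in h. lra.
move: h2; rewrite card_split; lia.
Qed.

Lemma deg20 v : v \notin L -> 20 <= #|N v|.
Proof.
move=> hv; have := emin v; rewrite card_gt0 => /set0Pn [u]; rewrite inN => hvu.
have huv : e u v by rewrite esym.
have := keyK hv huv.
have : v \in N u :\: N v by rewrite !inE huv eirr.
move=> hin; have : 0 < #|N u :\: N v| by apply/card_gt0P; exists v.
lia.
Qed.


Lemma diff_le (A B C : {set T}) : #|A :\: C| <= #|A :\: B| + #|B :\: C|.
Proof.
apply: leq_trans (_ : #|(A :\: B) :|: (B :\: C)| <= _).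
  apply: subset_leq_card; apply/subsetP => z; rewrite !inE.
  by case: (z \in A); case: (z \in B); case: (z \in C).
by rewrite cardsU leq_subr.
Qed.

Lemma step_facts x y : x \notin L -> y \notin L -> (x == y) || e x y ->
  19 * #|N x :\: N y| <= #|N y| /\ 19 * #|N y| <= 20 * #|N x|.
Proof.
move=> hx hy /orP [/eqP <- | hxy].
  by rewrite setDv cards0; split; lia.
have h1 := keyK hy hxy.
have hyx : e y x by rewrite esym.
have h2 := keyK hx hyx.
have h3 : #|N y| <= #|N x| + #|N y :\: N x|.
  by rewrite cardsD; have := subset_leq_card (subsetIr (N y) (N x)); have := subset_leq_card (subsetIl (N y) (N x)); lia.
split; lia.
Qed.

Lemma path3 x0 x1 x2 x3 : x0 \notin L -> x1 \notin L -> x2 \notin L -> x3 \notin L ->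
  (x0 == x1) || e x0 x1 -> (x1 == x2) || e x1 x2 -> (x2 == x3) || e x2 x3 ->
  5 * #|N x0 :\: N x3| < #|N x0|.
Proof.
move=> h0 h1 h2 h3 s1 s2 s3.
have [a0 b0] := step_facts h0 h1 s1.
have [a1 b1] := step_facts h1 h2 s2.
have [a2 b2] := step_facts h2 h3 s3.
have d1 := diff_le (N x0) (N x1) (N x3).
have d2 := diff_le (N x1) (N x2) (N x3).
have := deg20 h0.
lia.
Qed.

Definition Rs v := [set w | (w \notin L) && (5 * #|N v :\: N w| < #|N v|)].
Definition Xs v := [set w | [&& w \notin N v, w != v & 5 * #|N v :\: N w| < #|N v|]].

Lemma card_sumI (A B : {set T}) : #|A :&: B| = \sum_(u in A) (u \in B).
Proof. by rewrite -card_sumP; apply: eq_card => u; rewrite !inE. Qed.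

Lemma X_bound v : v \notin L -> 76 * #|Xs v| <= 5 * #|N v|.
Proof.
move=> hv.
have hd := deg20 hv.
have h1 : \sum_(w in Xs v) (4 * #|N v| + 1) <= \sum_(w in Xs v) 5 * #|N v :&: N w|.
  apply: leq_sum => w; rewrite /Xs in_set => /and3P [_ _ h].
  have := cardsID (N w) (N v); lia.
rewrite sum_nat_const -big_distrr /= in h1.
have h2 : \sum_(w in Xs v) #|N v :&: N w| <= \sum_(u in N v) #|N u :\: N v|.
  under eq_bigr => w _ do rewrite card_sumI.
  rewrite exchange_big /=; apply: leq_sum => u hu.
  rewrite -card_sumP; apply: subset_leq_card; apply/subsetP => w.
  rewrite in_set => /andP [hw hwu]; rewrite inN in hwu; rewrite in_setD (inN u w) esym hwu andbT.
  by move: hw; rewrite /Xs in_set => /and3P [].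
have h3 : \sum_(u in N v) (19 * #|N u :\: N v| + 1) <= \sum_(u in N v) #|N v|.
  apply: leq_sum => u hu; rewrite inN in hu.
  have := keyK hv (etrans (esym u v) hu); lia.
rewrite big_split /= sum_nat_const sum_nat_const -big_distrr /= in h3.
have h4 : #|N v| * (76 * #|Xs v|) <= #|N v| * (5 * #|N v|) by nia.
by rewrite leq_pmul2l in h4; last lia.
Qed.

Lemma R_card v : v \notin L -> #|Rs v| <= 1 + #|N v :\: L| + #|Xs v|.
Proof.
move=> hv.
apply: leq_trans (_ : #|(v |: (N v :\: L)) :|: Xs v| <= _).
  apply: subset_leq_card; apply/subsetP => w; rewrite /Rs in_set => /andP [hwL hw].
  rewrite in_setU in_setU1 in_setD hwL /=.
  case: (w =P v) => [// | /eqP hwv] /=.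
  case hwN : (w \in N v) => //=.
  by rewrite /Xs in_set hwN hwv hw.
rewrite cardsU cardsU1.
apply: leq_trans (leq_subr _ _) _.
by case: (v \notin _).
Qed.

Lemma odd_union (W1 W2 : {set T}) : odd_induced e W1 -> odd_induced e W2 ->
  (forall a b, a \in W1 -> b \in W2 -> ~~ e a b) -> odd_induced e (W1 :|: W2).
Proof.
move=> /forallP o1 /forallP o2 hab; apply/forallP => x; apply/implyP.
rewrite in_setU => /orP [hx | hx].
  have -> : N x :&: (W1 :|: W2) = N x :&: W1.
    apply/setP => y; rewrite !inE; case hy2 : (y \in W2); rewrite ?orbF //.
    by rewrite (negbTE (hab x y hx hy2)) /=.
  by have := o1 x; rewrite hx.
have -> : N x :&: (W1 :|: W2) = N x :&: W2.
  apply/setP => y; rewrite !inE; case hy1 : (y \in W1); rewrite ?orbF //=.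
  by rewrite esym (negbTE (hab y x hy1 hx)) /=.
by have := o2 x; rewrite hx.
Qed.

Definition Good := [set w | (w \notin L) && (#|N w :&: L| <= #|N w :\: L|)].
Definition Bad := [set w | (w \notin L) && (#|N w :\: L| < #|N w :&: L|)].
Definition Cl v := v |: (N v :\: L).

Lemma Cl_facts v x : v \notin L -> x \in Cl v -> x \notin L /\ ((v == x) || e v x).
Proof.
move=> hv; rewrite /Cl in_setU1 => /orP [/eqP -> | ].
  by rewrite eqxx.
by rewrite in_setD inN => /andP [-> ->]; rewrite orbT.
Qed.

Lemma greedy k : forall U : {set T}, #|U| <= k -> U \subset Good ->
  exists W : {set T}, [/\ odd_induced e W, 2 * #|U| <= 5 * #|W| &
    (forall w, w \in W -> exists2 c, c \in U & w \in Cl c)].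
Proof.
elim: k => [|k IH] U hU sU.
  exists set0; split.
  - by apply/forallP => x; rewrite inE.
  - by move: hU; rewrite leqn0 => /eqP ->.
  - by move=> w; rewrite inE.
case: (set_0Vmem U) => [-> | [v hvU]].
  exists set0; split.
  - by apply/forallP => x; rewrite inE.
  - by rewrite cards0.
  - by move=> w; rewrite inE.
have := subsetP sU v hvU; rewrite /Good in_set => /andP [hvL hvab].
have hvR : v \in Rs v by rewrite /Rs in_set hvL setDv cards0 muln0; have := deg20 hvL; lia.
set U' := U :\: Rs v.
have hsplit := cardsID (Rs v) U.
have hpos : 0 < #|U :&: Rs v| by apply/card_gt0P; exists v; rewrite in_setI hvU hvR.
have hU' : #|U'| <= k by rewrite /U'; lia.
have sU' : U' \subset Good by apply: subset_trans sU; apply: subsetDl.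
have [W' [oW' szW' witW']] := IH U' hU' sU'.
have [Wv [sWv [oWv szWv]]] := cluster esym eirr (subsetDl (N v) L).
have noconf : forall a b, a \in Wv -> b \in W' -> (a != b) && ~~ e a b.
  move=> a b ha hb.
  have [c hcU' hbc] := witW' b hb.
  move: hcU'; rewrite /U' in_setD => /andP [hcR hcU].
  have := subsetP sU c hcU; rewrite /Good in_set => /andP [hcL _].
  have [haL sva] := Cl_facts hvL (subsetP sWv a ha).
  have [hbL scb] := Cl_facts hcL hbc.
  have sbc : (b == c) || e b c by rewrite eq_sym esym.
  apply/negP => /negP; rewrite negb_and !negbK => sab.
  move: hcR; rewrite /Rs in_set hcL /=.
  by rewrite (path3 hvL haL hbL hcL sva sab sbc).
have oW : odd_induced e (Wv :|: W').
  apply: odd_union oWv oW' _ => a b ha hb.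
  by have /andP [] := noconf a b ha hb.
have disj : Wv :&: W' = set0.
  apply/setP => x; rewrite !inE; apply/negP => /andP [h1 h2].
  by have := noconf x x h1 h2; rewrite eqxx.
exists (Wv :|: W'); split => //.
- rewrite cardsU disj cards0 subn0.
  have hR := R_card hvL.
  have hX := X_bound hvL.
  have hd := deg20 hvL.
  have hRU : #|U :&: Rs v| <= #|Rs v| by apply: subset_leq_card; apply: subsetIr.
  have hdv := cardsID L (N v).
  move: szW'; rewrite /U' => szW'.
  lia.
- move=> w; rewrite in_setU => /orP [hw | hw].
    by exists v => //; apply: (subsetP sWv).
  have [c hc hwc] := witW' w hw.
  by exists c => //; move: hc; rewrite /U' in_setD => /andP [].
Qed.

Lemma bad_key w u : w \in Bad -> u \in L -> e w u -> #|N u| <= 3 * #|N w :&: L|.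
Proof.
rewrite /Bad in_set => /andP [hwL hab] huL hwu.
have h1 := keyK hwL (etrans (esym u w) hwu).
have h2 := cardsID (N w) (N u).
have h3 : #|N u :&: N w| <= #|N w| by apply: subset_leq_card; apply: subsetIr.
have h4 := cardsID L (N w).
lia.
Qed.

Lemma bad_bound : #|Bad| <= 3 * #|L|.
Proof.
pose a w := (#|N w :&: L|%:R : rat)%R.
have h : ((#|Bad|%:R : rat) =
   \sum_(w in Bad) \sum_(u in L) (if e w u then (a w)^-1 else 0))%R.
  rewrite -sum1_card natr_sum; apply: eq_bigr => w hw.
  have -> : (\sum_(u in L) (if e w u then (a w)^-1 else 0) =
             \sum_(u in L) (e w u)%:R * (a w)^-1)%R.
    by apply: eq_bigr => u _; case: (e w u); rewrite ?mul1r ?mul0r.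
  rewrite -mulr_suml -natr_sum.
  have -> : (\sum_(u in L) e w u)%N = #|N w :&: L|.
    by rewrite setIC card_sumI; apply: eq_bigr => u _; rewrite inN.
  rewrite mulfV // /a pnatr_eq0 -lt0n.
  by move: hw; rewrite /Bad in_set => /andP [_ h]; apply: leq_ltn_trans h.
have h2 : (\sum_(w in Bad) \sum_(u in L) (if e w u then (a w)^-1 else 0)
            <= \sum_(u in L) (3 : rat))%R.
  rewrite exchange_big /=; apply: ler_sum => u hu.
  have hNu : 0 < #|N u| := emin u.
  apply: le_trans (_ : (\sum_(w in Bad) (e u w)%:R * (3 / #|N u|%:R) <= _)%R).
    apply: ler_sum => w hw; case hwu : (e w u); last first.
      by rewrite esym hwu mul0r.
    rewrite esym hwu mul1r.
    have hk := bad_key hw hu hwu.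
    have hapos : (0 < a w)%R.
      rewrite /a ltr0n; move: hw; rewrite /Bad in_set => /andP [_ hh].
      by apply: leq_ltn_trans hh.
    rewrite ler_pdivlMr ?ltr0n //.
    rewrite mulrC ler_pdivrMr //.
    by rewrite /a (_ : (3 : rat) = (3%N)%:R)%R // -natrM ler_nat.
  rewrite -mulr_suml -natr_sum.
  have -> : (\sum_(w in Bad) e u w)%N = #|Bad :&: N u|.
    by rewrite card_sumI; apply: eq_bigr => w _; rewrite inN.
  have hle : (#|Bad :&: N u|%:R <= (#|N u|%:R : rat))%R.
    by rewrite ler_nat; apply: subset_leq_card; apply: subsetIr.
  apply: le_trans (_ : (#|N u|%:R * (3 / #|N u|%:R) <= _)%R).
    apply: ler_wpM2r => //; rewrite divr_ge0 // ler0n.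
  by rewrite mulrCA mulfV ?mulr1 // pnatr_eq0 -lt0n.
rewrite sumr_const -h in h2.
rewrite -(ler_nat rat) natrM.
by rewrite mulrC mulr_natl.
Qed.

End Main.

Theorem lemma2p5 (T : finType) (e : rel T) :
  simple_graph e ->
  min_deg_pos e ->
  (14 * #|Lset e (1 / 20)%R| <= #|T|)%N ->
  (#|T| <= 61 * f_o e)%N.
Proof.
move=> [esym eirr] emin hL.
have [W [oW szW _]] := greedy esym eirr emin (leqnn #|Good e|) (subxx _).
have hf : #|W| <= f_o e by rewrite /f_o; exact: (@leq_bigmax_cond _ (fun S : {set T} => odd_induced e S) (fun S : {set T} => #|S|) W oW).
have hB := bad_bound esym emin.
have hpart : #|~: Lset e (1 / 20)%R| <= #|Good e| + #|Bad e|.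
  apply: leq_trans (_ : #|Good e :|: Bad e| <= _); last by rewrite cardsU leq_subr.
  apply: subset_leq_card; apply/subsetP => x; rewrite in_setC in_setU /Good /Bad !in_set => ->.
  by rewrite /=; case: leqP.
have := cardsC (Lset e (1 / 20)%R).
lia.
Qed.
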